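(* On a network graph with $N$ nodes and maximum node degree $v$, the algorithm FastInitTree described in the context runs in time $O(Nv\log v)$.
   Context: FastInitTree, input a graph $\mathcal{G}=(\mathcal{V}\cup\{S\},\xi)$ with sink $S$ and a deadline $D$: initialize a global set $\mathcal{V}_{\mathrm{done}}=\emptyset$ and call ExtendTree$(S,D)$, where ExtendTree$(P,d)$ does: add $P$ to $\mathcal{V}_{\mathrm{done}}$; let $c_1,\dots,c_k$ be the neighbors of $P$ not in $\mathcal{V}_{\mathrm{done}}$, sorted in descending order of power, where the power of a node is its number of neighbors not in $\mathcal{V}_{\mathrm{done}}$; for $i=1,\dots,\min\{k,d\}$: set $P$ as parent of $c_i$ and, if $d>0$, call ExtendTree$(c_i,d-i)$. Finally, each node not in $\mathcal{V}_{\mathrm{done}}$ is made a child of one of its neighbors in $\mathcal{V}_{\mathrm{done}}$ having the fewest children. The output is a spanning tree rooted at $S$. *)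

(* Defs.v *)
From mathcomp Require Import all_boot.
Set Implicit Arguments. Unset Strict Implicit. Unset Printing Implicit Defensive.

Section FastInitTree.
Variables (T : finType) (e : rel T).

Definition nbrs (P : T) : seq T := [seq y <- enum T | e P y].
Definition deg (P : T) : nat := size (nbrs P).
Definition maxdeg : nat := \max_(x : T) deg x.

Definition power (done : {set T}) (x : T) : nat :=
  count (fun y => y \notin done) (nbrs x).

(* cost charged for comparison-sorting k items (merge sort: at most
   k * ceil(log2 k) comparisons) *)
Definition sort_cost (k : nat) : nat := k * up_log 2 k.

(* algorithm state: V_done, parent map, elapsed elementary steps *)
Record st := St { done : {set T}; par : T -> option T; cost : nat }.

(* number of children of y in the current parent map (maintained as a
   counter in an implementation; read in O(1)) *)
Definition nchildren (p : T -> option T) (y : T) : nat :=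
  #|[pred z | p z == Some y]|.

(* ExtendTree(P, d); [fuel] only serves to make the recursion structural
   (d strictly decreases at each recursive call, so fuel d.+1 suffices).
   Costs: 1 for the call, deg P for adding P to V_done (updating the power
   counters of P's neighbours), deg P for scanning P's neighbours, the
   sorting cost, and 1 per loop iteration. *)
Fixpoint extend (fuel : nat) (P : T) (d : nat) (s : st) : st :=
  match fuel with
  | 0 => s
  | fuel'.+1 =>
    let dn := P |: done s in
    let cs := sort (fun x y => power dn y <= power dn x)
                   [seq c <- nbrs P | c \notin dn] in
    let c0 := cost s + 1 + deg P + deg P + sort_cost (size cs) in
    let fix loop (l : seq T) (i : nat) (s' : st) : st :=
      match l with
      | [::] => s'
      | c :: l' =>
        if d < i then s' else
        let s1 := St (done s') (par s') (cost s' + 1) in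
        if c \in done s1 then loop l' i.+1 s1
        else
          let s2 := St (done s1)
                       (fun x => if x == c then Some P else par s1 x)
                       (cost s1) in
          loop l' i.+1 (extend fuel' c (d - i) s2)
      end in
    loop cs 1 (St dn (par s) c0)
  end.

(* Cost: 1 per node, plus deg x + 1 for a
   node x not in V_done (scan of its neighbours, then the assignment). *)
Definition attach_one (dn : {set T}) (s : st) (x : T) : st :=
  if x \in dn then St (done s) (par s) (cost s + 1) else
  match [seq y <- nbrs x | y \in dn] with
  | [::] => St (done s) (par s) (cost s + 1 + deg x)
  | y0 :: ys =>
    let best := foldl (fun b y => if nchildren (par s) y < nchildren (par s) b
                                  then y else b) y0 ys in
    St (done s) (fun z => if z == x then Some best else par s z)
       (cost s + 1 + deg x + 1)
  end.

Definition attach (s : st) : st := foldl (attach_one (done s)) s (enum T).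

Definition fastInitTree (S : T) (D : nat) : st :=
  attach (extend D.+1 S D (St set0 (fun _ => None) 0)).

Definition fastInitTree_time (S : T) (D : nat) : nat :=
  cost (fastInitTree S D).

End FastInitTree.

(* Main.v *)
Require Import Defs.
From mathcomp Require Import all_boot zify.
Section S.
Variables (T : finType) (e : rel T).
Definition B := 1 + 3 * maxdeg e + maxdeg e * up_log 2 (maxdeg e).

Lemma deg_le x : deg e x <= maxdeg e.
Proof. exact (@leq_bigmax T (deg e) x). Qed.

Lemma extend_pot fuel P d s : P \notin done s ->
  cost (extend e fuel P d s) + B * #|~: done (extend e fuel P d s)|
  <= cost s + B * #|~: done s|.
Proof.
elim: fuel P d s => [|f IH] P d s HP //=.
set cs := sort _ _.
set s0 := St _ _ _.
match goal with |- context [?L cs 1 s0] => set loop := L end.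
have Hloop : forall l i s', cost (loop l i s') + B * #|~: done (loop l i s')|
  <= cost s' + size l + B * #|~: done s'|.
  elim => [|c l IHl] i s' /=; first by rewrite addn0.
  case: (d < i); first lia.
  case: ifP => Hc.
    apply: leq_trans (IHl _ _) _ => /=; lia.
  apply: leq_trans (IHl _ _) _.
  have := IH c (d - i) (St (done s') (fun x => if x == c then Some P else par s' x) (cost s' + 1)) (negbT Hc).
  rewrite /=; lia.
apply: leq_trans (Hloop cs 1 s0) _.
rewrite /s0 /=.
have H1 := cardsC (P |: done s).
have H2 := cardsC (done s).
rewrite cardsU1 HP in H1.
have Hcs : size cs <= maxdeg e.
  rewrite size_sort; apply: leq_trans (deg_le P).
  by rewrite size_filter count_size.
have Hsc : sort_cost (size cs) <= maxdeg e * up_log 2 (maxdeg e).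
  by rewrite /sort_cost leq_mul // leq_up_log.
have Hd := deg_le P.
have -> : #|~: done s| = #|~: (P |: done s)|.+1 by lia.
rewrite mulnS /B.
move: Hsc; set u := maxdeg e * _ => Hsc.
lia.
Qed.

Lemma attach_cost dn l s :
  cost (foldl (attach_one e dn) s l) <= cost s + size l * (maxdeg e).+2.
Proof.
elim: l s => [|x l IHl] s /=; first by rewrite addn0.
apply: leq_trans (IHl _) _.
have Hd := deg_le x.
rewrite /attach_one; case: ifP => _ /=; first lia.
case: [seq y <- nbrs e x | y \in dn] => [|y0 ys] /=; lia.
Qed.
End S.

Theorem theorem5 :
  exists C : nat,
    forall (T : finType) (e : rel T) (S : T) (D : nat),
      symmetric e -> irreflexive e ->
      fastInitTree_time e S D
        <= C * #|T| * (maxdeg e).+1 * (up_log 2 (maxdeg e)).+1.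
Proof.
exists 7 => T e S D _ _.
rewrite /fastInitTree_time /fastInitTree /attach.
set s1 := extend _ _ _ _ _.
apply: (leq_trans (@attach_cost T e (done s1) (enum T) s1)).
have H1 := @extend_pot T e D.+1 S D (St set0 (fun _ => None) 0) ltac:(by rewrite in_set0).
rewrite -cardT.
have Hc : #|~: done s1| <= #|T| by apply: max_card.
rewrite /= setC0 cardsT in H1.
move: H1 Hc; rewrite -/s1 /B.
move: (cost s1) #|~: done s1| #|T| (maxdeg e) (up_log 2 (maxdeg e)) => c k n v u H1 Hc.
nia.
Qed.
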